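(* Let $\mathbf{s}(\lambda)$ and $\mathbf{v}(i)$ be $N$-vectors with entries $s_j(\lambda) = S(e_j, e_j; \lambda)$ and $v_j(i) = \delta_{ij}$, and let $\bar{\mathbf{s}}(\lambda) = (\mathbf{s}(\lambda), \mathbf{s}(\lambda))$ and $\bar{\mathbf{v}}(i) = (\mathbf{v}(i), \mathbf{v}(i))$ be the corresponding $2N$-vectors. Then \[ G_i(\lambda, z) = S(e_i, e_i; \lambda) + \sum_{d = 1}^{\infty} \bar{\mathbf{v}}^{T}(i)\, \mathbf{K}(\lambda, z)^d\, \bar{\mathbf{s}}(\lambda). \]
   Context: Fix $N \geq 3$. Let $\mathcal{G}_N$ be the groupoid with objects $\{1,\dots,N\}$, generated by arrows $A_{i,j}^{(k)}$ ($i \neq j$, $k \in \{-1,1\}$) with source $i$ and target $j$, subject to the relations $A_{i,j}^{(k)} A_{j,\ell}^{(k)} = A_{i,\ell}^{(k)}$ (with $A_{i,i}^{(k)} := e_i$, the unit at $i$). Every arrow has a unique reduced representation, either empty or an alternating product $A_{i_1,i_2}^{(k)} A_{i_2,i_3}^{(-k)} \cdots$ with consecutive indices distinct. A metric $|\cdot|_{\mathcal{M}}$ generated by the generators assigns a nonnegative value to each generator and is additive over the reduced representation, with $|e_i|_{\mathcal{M}} = 0$. Let $(W_n)_{n \ge 0}$ be a Markov chain on the arrows with $P(W_{n+1} = y \mid W_n = x) = p_{i,j}^{(k)}$ if $x^{-1}y = A_{i,j}^{(k)}$ ($i \neq j$) and $0$ otherwise, where all $p_{i,j}^{(k)} \in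 (0,1)$ and $\sum_{j,k} p_{i,j}^{(k)} = 1$ for each $i$. Write $P_x, E_x$ for the chain started at $W_0 = x$. For arrows $x, y$ define $S(x, y; \lambda) = \sum_{n\ge 0} P_x(W_n = y)\lambda^n$, let $T(0,y) = \inf\{k \ge 0 : W_k = W_0 y\}$, and let $R_{i,j}^{(k)}(\lambda) = E_{e_i}[\lambda^{T(0, A_{i,j}^{(k)})}]$. Define $G_i(\lambda, z) = E_{e_i}\big[\sum_{n\ge 0} z^{|W_n|_{\mathcal{M}}} \lambda^n\big]$. Let $\mathbf{B}(k; \lambda, z)$ be the $N \times N$ matrix with entries $\mathbf{B}_{i,j}(k; \lambda, z) = (1 - \delta_{i,j})\, z^{|A_{i,j}^{(k)}|_{\mathcal{M}}} R_{i,j}^{(k)}(\lambda)$, and let $\mathbf{K}(\lambda, z)$ be the $2N \times 2N$ block matrix $\begin{pmatrix} \mathbf{0} & \mathbf{B}(1; \lambda, z) \\ \mathbf{B}(-1; \lambda, z) & \mathbf{0} \end{pmatrix}$. *)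

(* Defs.v *)
From HB Require Import structures.
From mathcomp Require Import all_boot all_order all_algebra.
From mathcomp Require Import all_classical all_reals all_analysis.
Set Implicit Arguments. Unset Strict Implicit. Unset Printing Implicit Defensive.
Import Order.TTheory GRing.Theory Num.Theory.
Local Open Scope ring_scope.

(* Conventions.
   - Objects of the groupoid G_N are 'I_N.
   - The sign k in {-1,1} is encoded by a bool: true = +1, false = -1.
   - A letter (j, k) : 'I_N * bool appearing in a word from source i stands for
     the generator A_{t,j}^{(k)}, where t is the target of the preceding
     letter (or the source i for the first letter).
   - An arrow with source i is represented by its unique reduced word
     (seq of letters; [::] is the unit e_i).  The Markov chain started at
     e_i only visits arrows with source i. *)

Section Groupoid.
Variable N : nat.
Definition letter := ('I_N * bool)%type.

Definition target (i : 'I_N) (w : seq letter) : 'I_N := last i (map fst w).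

(* right multiplication of the reduced word w (source i) by the generator
   A_{t,a.1}^{(a.2)}, t = target i w (a.1 <> t assumed), returning the
   reduced word of the product, using A^{(k)}_{s,t} A^{(k)}_{t,j} = A^{(k)}_{s,j}
   and A^{(k)}_{s,s} = e_s. *)
Definition step (i : 'I_N) (w : seq letter) (a : letter) : seq letter :=
  match rev w with
  | [::] => [:: a]
  | (t', k') :: rw' =>
      let w' := rev rw' in
      if k' == a.2 then (if a.1 == target i w' then w' else rcons w' a)
      else rcons w a
  end.

Definition walk (i : 'I_N) (cs : seq letter) : seq letter := foldl (step i) [::] cs.

Definition positions (i : 'I_N) (cs : seq letter) : seq (seq letter) :=
  [::] :: scanl (step i) [::] cs.

End Groupoid.

Section Chain.
Variables (R : realType) (N : nat).
Variable p : 'I_N -> 'I_N -> bool -> R.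
Variable len : 'I_N -> 'I_N -> bool -> R.

Fixpoint mlen_from (s : 'I_N) (w : seq (letter N)) : R :=
  match w with
  | [::] => 0
  | (t, k) :: w' => len s t k + mlen_from t w'
  end.

Fixpoint pathw (i : 'I_N) (w : seq (letter N)) (cs : seq (letter N)) : R :=
  match cs with
  | [::] => 1
  | a :: cs' =>
      (if a.1 != target i w then p (target i w) a.1 a.2 else 0)
        * pathw i (step i w a) cs'
  end.

Definition Pn (i : 'I_N) (n : nat) (x : seq (letter N)) : R :=
  \sum_(cs : n.-tuple (letter N) | walk i cs == x) pathw i [::] cs.

Local Open Scope ereal_scope.

Definition Sgf (j : 'I_N) (lam : R) : \bar R :=
  \sum_(n <oo) ((Pn j n [::] * lam ^+ n)%R)%:E.

(* R_{i,j}^{(k)}(lambda) = E_{e_i}[lambda^{T(0, A_{i,j}^{(k)})}]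
   = sum_n P_{e_i}(T = n) lambda^n, T = first n with W_n = A_{i,j}^{(k)} *)
Definition Rgf (i j : 'I_N) (k : bool) (lam : R) : \bar R :=
  \sum_(n <oo)
    ((\sum_(cs : n.-tuple (letter N)
              | index [:: (j, k)] (positions i cs) == n) pathw i [::] cs)
      * lam ^+ n)%R%:E.

Definition Ggf (i : 'I_N) (lam z : R) : \bar R :=
  \sum_(n <oo)
    ((\sum_(cs : n.-tuple (letter N))
        pathw i [::] cs * z `^ (mlen_from i (walk i cs))) * lam ^+ n)%R%:E.

Definition Bmx (k : bool) (lam z : R) (i j : 'I_N) : \bar R :=
  if i != j then (z `^ len i j k)%:E * Rgf i j k lam else 0.

Definition Kmx (lam z : R) (a b : 'I_(N + N)) : \bar R :=
  match fintype.split a, fintype.split b with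
  | inl i, inr j => Bmx true lam z i j
  | inr i, inl j => Bmx false lam z i j
  | _, _ => 0
  end.

Definition sbar (lam : R) (a : 'I_(N + N)) : \bar R :=
  match fintype.split a with inl j | inr j => Sgf j lam end.

Definition vbar (i : 'I_N) (a : 'I_(N + N)) : \bar R :=
  match fintype.split a with inl j | inr j => if i == j then 1 else 0 end.
End Chain.

Local Open Scope ereal_scope.
Fixpoint erowpow (R : realType) (m : nat) (M : 'I_m -> 'I_m -> \bar R)
  (u : 'I_m -> \bar R) (d : nat) : 'I_m -> \bar R :=
  match d with
  | 0 => u
  | d'.+1 => fun b => \sum_(a < m) erowpow M u d' a * M a b
  end.

Definition ebilin (R : realType) (m : nat) (M : 'I_m -> 'I_m -> \bar R)
  (u w : 'I_m -> \bar R) (d : nat) : \bar R :=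
  \sum_(a < m) erowpow M u d a * w a.

(* Main.v *)
Require Import Defs.
From HB Require Import structures.
From mathcomp Require Import all_boot all_order all_algebra.
From mathcomp Require Import all_classical all_reals all_analysis.
From mathcomp Require Import zify.
Import Order.TTheory GRing.Theory Num.Theory.
Local Open Scope ring_scope.

Module MComb.
Import Order.TTheory GRing.Theory Num.Theory.
Set Implicit Arguments. Unset Strict Implicit. Unset Printing Implicit Defensive.

Section Comb.
Variable N : nat.
Notation L := (letter N).

Definition lastsign (w : seq L) : option bool :=
  if w is c :: w' then Some (last c w').2 else None.

Lemma lastsign_rcons (w : seq L) (l : L) : lastsign (rcons w l) = Some l.2.
Proof. by case: w => [|c w] //=; rewrite last_rcons. Qed.

Fixpoint red (s : 'I_N) (pv : option bool) (w : seq L) : bool :=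
  match w with
  | [::] => true
  | c :: w' => [&& c.1 != s, pv != Some c.2 & red c.1 (Some c.2) w']
  end.

Lemma target_cons (s : 'I_N) (c : L) (w : seq L) : target s (c :: w) = target c.1 w.
Proof. by []. Qed.

Lemma target_cat (s : 'I_N) (P w : seq L) : target s (P ++ w) = target (target s P) w.
Proof. by rewrite /target map_cat last_cat. Qed.

Lemma target_rcons (s : 'I_N) (w : seq L) (l : L) : target s (rcons w l) = l.1.
Proof. by rewrite /target map_rcons last_rcons. Qed.

Lemma red_rcons (s : 'I_N) pv (w : seq L) (l : L) :
  red s pv (rcons w l) =
  [&& red s pv w, l.1 != target s w &
      (if w is [::] then pv else lastsign w) != Some l.2].
Proof.
elim: w s pv => [|c w IH] s pv /=; first by rewrite andbT.
rewrite IH target_cons; case: w IH => [|d w] IH /=; by case: (c.1 != s); case: (pv != Some c.2); rewrite ?andbT.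
Qed.

Lemma step_nil (s : 'I_N) (a : L) : step s [::] a = [:: a].
Proof. by []. Qed.

Lemma step_rcons (s : 'I_N) (w : seq L) (l a : L) :
  step s (rcons w l) a =
  if l.2 == a.2 then (if a.1 == target s w then w else rcons w a)
  else rcons (rcons w l) a.
Proof. by rewrite /step rev_rcons; case: l => t k /=; rewrite revK. Qed.

Lemma ifnil_rcons (T : Type) (w : seq L) (l : L) (X Y : T) :
  (if rcons w l is [::] then X else Y) = Y.
Proof. by case: w. Qed.

Lemma red_step (s : 'I_N) (w : seq L) (a : L) :
  red s None w -> a.1 != target s w -> red s None (step s w a).
Proof.
case/lastP: w => [|w l].
  by move=> _ H; rewrite step_nil /= H.
move=> H Ha; move: H; rewrite red_rcons => /and3P[Hw Hl Hs].
rewrite target_rcons in Ha.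
rewrite step_rcons.
case: eqP => Heq.
  case: eqP => [_|Hb]; first exact: Hw.
  rewrite red_rcons Hw /=; apply/andP; split; first exact/eqP.
  by rewrite -Heq.
rewrite red_rcons red_rcons Hw Hl Hs /= target_rcons Ha ifnil_rcons lastsign_rcons /=.
by apply/eqP => -[] E; apply: Heq.
Qed.

Lemma size_step (s : 'I_N) (w : seq L) (a : L) : (size (step s w a) <= (size w).+1)%N.
Proof.
case/lastP: w => [|w l] //; rewrite step_rcons.
case: ifP => _; last by rewrite !size_rcons.
by case: ifP => _; rewrite !size_rcons // leqW.
Qed.

Lemma size_foldl (s : 'I_N) (w cs : seq L) : (size (foldl (step s) w cs) <= size w + size cs)%N.
Proof.
elim: cs w => [|c cs IH] w /=; first by rewrite addn0.
apply: leq_trans (IH _) _; rewrite addnS -addSn leq_add2r; exact: size_step.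
Qed.

Definition startsb (b : L) (w : seq L) := if w is c :: _ then c == b else false.

Lemma startsb_step (s : 'I_N) (b : L) (w : seq L) (a : L) :
  ~~ startsb b w -> startsb b (step s w a) -> step s w a = [:: b].
Proof.
case/lastP: w => [|w l].
  by rewrite step_nil /= => _ /eqP ->.
rewrite step_rcons => Hn.
have Hw : ~~ startsb b w.
  by apply: contra Hn; case: w => // c w; rewrite rcons_cons.
case: ifP => _.
  case: ifP => _; first by move=> H; move: Hw; rewrite H.
  case: w Hw {Hn} => [|c w] Hw; first by move=> /= /eqP ->.
  by rewrite rcons_cons /= => H; move: Hw; rewrite /= H.
by case: w Hn {Hw} => [|c w] Hn; rewrite ?rcons_cons /= => H; move: Hn; rewrite /= H.
Qed.

Lemma startsb_foldl (s : 'I_N) (b : L) (w cs : seq L) :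
  ~~ startsb b w -> startsb b (foldl (step s) w cs) -> [:: b] \in scanl (step s) w cs.
Proof.
elim: cs w => [|c cs IH] w /= Hn Hs; first by rewrite Hs in Hn.
rewrite in_cons; case Hc: (startsb b (step s w c)).
  by rewrite (startsb_step Hn Hc) eqxx.
by rewrite IH ?orbT // Hc.
Qed.

Lemma step_cat (s : 'I_N) (P w : seq L) (a : L) :
  w != [::] -> step s (P ++ w) a = P ++ step (target s P) w a.
Proof.
case/lastP: w => [|w l] // _.
rewrite -rcons_cat !step_rcons target_cat.
by case: ifP => _; [case: ifP => _ |]; rewrite ?rcons_cat.
Qed.

Definition pre (i : 'I_N) (b c : L) : seq L :=
  if c.2 == b.2 then (if c.1 == i then [::] else [:: c]) else [:: b; c].

Definition conc (i : 'I_N) (b : L) (y : seq L) : seq L :=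
  match y with
  | [::] => [:: b]
  | c :: w => pre i b c ++ w
  end.

Lemma target_pre (i : 'I_N) (b c : L) : target i (pre i b c) = c.1.
Proof.
rewrite /pre; case: ifP => _; last by [].
by case: ifP => [/eqP -> |].
Qed.

Lemma target_conc (i : 'I_N) (b : L) (y : seq L) : target i (conc i b y) = target b.1 y.
Proof.
case: y => [|c w] //=.
by rewrite target_cat target_pre.
Qed.

Lemma step_conc (i : 'I_N) (b : L) (y : seq L) (a : L) :
  b.1 != i -> a.1 != target b.1 y ->
  step i (conc i b y) a = conc i b (step b.1 y a).
Proof.
case: b => j k; case: a => a1 a2 /= => /eqP Hji.
case: y => [|c w] Ha.
  rewrite /conc (step_rcons i [::] (j,k)) /pre /= cats0 eq_sym; by [].
case: w Ha => [|d w] Ha; last first.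
  rewrite {1}/conc step_cat // target_pre (step_cat j [:: c]) //.
case: c Ha => c1 c2 /= Ha.
rewrite /conc cats0 (step_rcons j [::] (c1,c2)) /pre /=.
move: Ha; rewrite /target /= => /eqP Ha.
rewrite /step /rev /target /=.
repeat (case: eqP => /= ?); try congruence.
Qed.

Lemma conc_inj (i : 'I_N) (b : L) (y x : seq L) :
  red b.1 None y -> red i None (b :: x) ->
  (conc i b y == b :: x) = (y == x).
Proof.
case: b => j k /=.
case: y => [|c w] Hy Hbx.
  by rewrite /= eqseq_cons eqxx /=.
case: c Hy => c1 c2 Hy.
move: Hy Hbx => /= /andP[Hc1 Hw] /andP[Hj Hx].
rewrite /pre /=.
case: (c2 =P k) => [Hck|Hck]; [subst c2; case: (c1 =P i) => [Hci|Hci] |].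
- subst c1; rewrite /=.
  apply/idP/idP => /eqP E; [move: Hw; rewrite E | move: Hx; rewrite -E];
    by rewrite /= eqxx /= andbF.
- rewrite /=.
  apply/idP/idP => /eqP E.
    by case: E => E1 _; rewrite E1 eqxx in Hc1.
  by move: Hx; rewrite -E /= eqxx /= andbF.
- by rewrite /= eqseq_cons eqxx.
Qed.

End Comb.

End MComb.
Import MComb.

Module MTup.
Import Order.TTheory GRing.Theory Num.Theory.
Set Implicit Arguments. Unset Strict Implicit. Unset Printing Implicit Defensive.

Section Tup.
Variables (T : finType) (R' : Type) (idx : R') (op : Monoid.com_law idx).

Lemma big_tuple_cons n (F : seq T -> R') :
  \big[op/idx]_(t : n.+1.-tuple T) F t =
  \big[op/idx]_(c : T) \big[op/idx]_(t : n.-tuple T) F (c :: t).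
Proof.
rewrite pair_big /=.
rewrite (reindex (fun p : T * n.-tuple T => [tuple of p.1 :: p.2])) /=.
  by apply: eq_bigr => -[c t] _.
apply: onW_bij.
exists (fun t : n.+1.-tuple T => (thead t, [tuple of behead t])).
  move=> [c t] /=; congr pair.
  by apply/val_inj.
move=> t; apply/val_inj => /=.
by case: t => [[|c s] Hs].
Qed.

Lemma big_tuple0 (F : seq T -> R') :
  \big[op/idx]_(t : 0.-tuple T) F t = F [::].
Proof.
rewrite (big_pred1 [tuple]) // => t.
by rewrite [t]tuple0 /= eqxx.
Qed.

Lemma big_tuple_cat n m k (F : seq T -> R') : n = (m + k)%N ->
  \big[op/idx]_(t : n.-tuple T) F t =
  \big[op/idx]_(x : m.-tuple T) \big[op/idx]_(y : k.-tuple T) F (x ++ y).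
Proof.
move=> ->; elim: m F => [|m IH] F.
  by rewrite (big_tuple0 (fun x : seq T => \big[op/idx]_(y : k.-tuple T) F (x ++ y))).
transitivity (\big[op/idx]_(c : T) \big[op/idx]_(t : (m + k).-tuple T) F (c :: t)).
  exact: big_tuple_cons.
rewrite (@big_tuple_cons m (fun x : seq T => \big[op/idx]_(y : k.-tuple T) F (x ++ y))).
apply: eq_bigr => c _.
exact: (IH (fun s => F (c :: s))).
Qed.

End Tup.

End MTup.
Import MTup.

Module MChain.
Import Order.TTheory GRing.Theory Num.Theory.
Set Implicit Arguments. Unset Strict Implicit. Unset Printing Implicit Defensive.
Local Open Scope ring_scope.

Section SumTup.
Variables (T : finType) (V : nmodType).
Lemma sum_tuple_cat n m k (F : seq T -> V) : n = (m + k)%N ->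
  \sum_(t : n.-tuple T) F t = \sum_(x : m.-tuple T) \sum_(y : k.-tuple T) F (x ++ y).
Proof. exact: big_tuple_cat. Qed.
Lemma sum_tuple_cons n (F : seq T -> V) :
  \sum_(t : n.+1.-tuple T) F t = \sum_(c : T) \sum_(t : n.-tuple T) F (c :: t).
Proof. exact: big_tuple_cons. Qed.
Lemma sum_tuple0 (F : seq T -> V) : \sum_(t : 0.-tuple T) F t = F [::].
Proof. exact: big_tuple0. Qed.
End SumTup.

Section Chain2.
Variables (R : realType) (N : nat) (p : 'I_N -> 'I_N -> bool -> R).
Notation L := (letter N).

Lemma pathw_cat (i : 'I_N) (w c1 c2 : seq L) :
  pathw p i w (c1 ++ c2) = pathw p i w c1 * pathw p i (foldl (step i) w c1) c2.
Proof.
elim: c1 w => [|a c1 IH] w /=; first by rewrite mul1r.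
by rewrite IH mulrA.
Qed.

Lemma walk_red (i : 'I_N) (w cs : seq L) :
  pathw p i w cs != 0 -> red i None w -> red i None (foldl (step i) w cs).
Proof.
elim: cs w => [|a cs IH] w //=.
case: ifP => Ha; last by rewrite mul0r eqxx.
move=> H Hw; apply: IH; last exact: red_step.
by apply: contra H => /eqP ->; rewrite mulr0.
Qed.

Lemma pathw_conc (i : 'I_N) (b : L) (y cs : seq L) :
  b.1 != i -> red b.1 None y ->
  pathw p i (conc i b y) cs = pathw p b.1 y cs.
Proof.
move=> Hb; elim: cs y => [|a cs IH] y Hy //=.
rewrite target_conc; case: ifP => Ha; last by rewrite !mul0r.
by rewrite step_conc // IH // red_step.
Qed.

Lemma walk_conc (i : 'I_N) (b : L) (y cs : seq L) :
  b.1 != i -> red b.1 None y -> pathw p b.1 y cs != 0 ->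
  foldl (step i) (conc i b y) cs = conc i b (foldl (step b.1) y cs).
Proof.
move=> Hb; elim: cs y => [|a cs IH] y Hy //=.
case: ifP => Ha; last by rewrite mul0r eqxx.
move=> H; rewrite step_conc // IH // ?red_step //.
by apply: contra H => /eqP ->; rewrite mulr0.
Qed.

Lemma nth_last_scanl (T : Type) (f : T -> L -> T) (x y0 : T) (s : seq L) :
  nth y0 (x :: scanl f x s) (size s) = foldl f x s.
Proof. by elim: s x => [|c s IH] x //=. Qed.

Lemma positions_cat (i : 'I_N) (c1 c2 : seq L) :
  positions i (c1 ++ c2) = positions i c1 ++ scanl (step i) (walk i c1) c2.
Proof. by rewrite /positions scanl_cat. Qed.

Lemma size_positions (i : 'I_N) (cs : seq L) : size (positions i cs) = (size cs).+1.
Proof. by rewrite /positions /= size_scanl. Qed.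

Lemma index_positions_cat (i : 'I_N) (b : L) (c1 c2 : seq L) :
  (index [:: b] (positions i (c1 ++ c2)) == size c1) =
  (index [:: b] (positions i c1) == size c1).
Proof.
rewrite positions_cat index_cat.
case: ifP => Hin //.
rewrite size_positions (memNindex (negbT Hin)) size_positions.
have F1 : forall a k, (a.+1 + k == a)%N = false by move=> a k; apply/eqP; lia.
by rewrite F1 -(addn0 (size c1).+1) F1.
Qed.

Lemma walk_index (i : 'I_N) (b : L) (cs : seq L) :
  index [:: b] (positions i cs) == size cs -> walk i cs = [:: b].
Proof.
move=> /eqP H.
have Hin : [:: b] \in positions i cs.
  by rewrite -index_mem H size_positions.
have := nth_index [::] Hin; rewrite H /positions nth_last_scanl.
by [].
Qed.

Definition Fm (i : 'I_N) (b : L) (m : nat) : R :=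
  \sum_(cs : m.-tuple L | index [:: b] (positions i cs) == m) pathw p i [::] cs.

Lemma index_lt (i : 'I_N) (b : L) (x cs : seq L) :
  walk i cs = b :: x -> (index [:: b] (positions i cs) < (size cs).+1)%N.
Proof.
move=> H.
have Hs : startsb b (walk i cs) by rewrite H /= eqxx.
have Hin := startsb_foldl (w := [::]) (s := i) isT Hs.
by rewrite -(size_positions i cs) index_mem /positions in_cons Hin orbT.
Qed.

Lemma PnE (i : 'I_N) (n : nat) (x : seq L) :
  Pn p i n x = \sum_(cs : n.-tuple L) (if walk i cs == x then pathw p i [::] cs else 0).
Proof. by rewrite /Pn big_mkcond. Qed.

Lemma FmE (i : 'I_N) (b : L) (m : nat) :
  Fm i b m = \sum_(cs : m.-tuple L)
    (if index [:: b] (positions i cs) == m then pathw p i [::] cs else 0).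
Proof. by rewrite /Fm big_mkcond. Qed.

Lemma Pn_cons (i : 'I_N) (b : L) (x : seq L) (n : nat) :
  red i None (b :: x) ->
  Pn p i n (b :: x) = \sum_(m < n.+1) Fm i b m * Pn p b.1 (n - m) x.
Proof.
move=> Hbx.
have Hbi : b.1 != i by case: b Hbx => j k /= /andP[].
rewrite PnE.
transitivity (\sum_(cs : n.-tuple L) \sum_(m < n.+1)
   (if index [:: b] (positions i cs) == m then
      (if walk i cs == b :: x then pathw p i [::] cs else 0) else 0)).
  apply: eq_bigr => cs _.
  case: eqP => Hw; last by rewrite big1 // => m _; case: ifP.
  have Hlt := index_lt Hw; rewrite size_tuple in Hlt.
  rewrite (bigD1 (Ordinal Hlt)) //= eqxx big1 ?addr0 // => m Hm.
  case: eqP => // Hm'; move: Hm; rewrite -(inj_eq val_inj) /= Hm' eqxx //.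
rewrite exchange_big; apply: eq_bigr => -[m Hm] _.
have Hnm : n = (m + (n - m))%N by rewrite subnKC.
rewrite (sum_tuple_cat (fun cs : seq L =>
   if index [:: b] (positions i cs) == m then
      (if walk i cs == b :: x then pathw p i [::] cs else 0) else 0) Hnm).
rewrite FmE PnE mulr_suml; apply: eq_bigr => c1 _.
rewrite mulr_sumr; apply: eq_bigr => c2 _.
have Hc1 := size_tuple c1.
have E := index_positions_cat i b c1 c2; rewrite Hc1 in E; rewrite E.
case: ifP => Hidx; last by rewrite mul0r.
have Hwc1 : walk i c1 = [:: b] by apply: walk_index; rewrite Hc1.
rewrite pathw_cat /walk foldl_cat -/(walk i c1) Hwc1.
have Hb : [:: b] = conc i b [::] by [].
rewrite Hb pathw_conc //.
have [Hz|Hnz] := eqVneq (pathw p b.1 [::] c2) 0.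
  by rewrite Hz !(mulr0, if_same).
have Hred : red b.1 None (foldl (step b.1) [::] c2) by apply: walk_red.
rewrite walk_conc // conc_inj //.
by case: ifP; rewrite ?mulr0.
Qed.

End Chain2.

End MChain.
Import MChain.

Module MSer.
Import Order.TTheory GRing.Theory Num.Theory.
Set Implicit Arguments. Unset Strict Implicit. Unset Printing Implicit Defensive.
Local Open Scope ring_scope.
Local Open Scope ereal_scope.

Section Ser.
Variable R : realType.

Lemma nneseries_mulr_gen (f : nat -> \bar R) (B : \bar R) :
  (forall m, 0 <= f m) -> 0 <= B ->
  \sum_(m <oo) (f m * B) = (\sum_(m <oo) f m) * B.
Proof.
move=> f0; case: B => [r| |] // B0.
- rewrite (eq_eseriesr (fun i _ => muleC (f i) r%:E)) nneseriesZl //.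
  by rewrite muleC.
- case: (pselect (exists m, 0 < f m)) => [[m Hm]|Hn].
    have -> : \sum_(i <oo) (f i * +oo) = +oo.
      apply: (@nneseries_pinfty _ _ xpredT m) => //.
        by move=> n _; exact: mule_ge0.
      exact: gt0_muley.
    have Hle : f m <= \sum_(i <oo) f i.
      apply: le_trans (nneseries_lim_ge m.+1 _) => //.
      by rewrite big_nat_recr //= leeDr // sume_ge0.
    by rewrite gt0_muley // (lt_le_trans Hm Hle).
  have fz : forall m, f m = 0.
    move=> m; apply/eqP; rewrite eq_le f0 andbT leNgt; apply/negP => H.
    by apply: Hn; exists m.
  have -> : \sum_(i <oo) f i = 0 by rewrite eseries0 // => i _ _; rewrite fz.
  by rewrite mul0e eseries0 // => i _ _; rewrite fz mul0e.
Qed.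

Lemma cauchy_nn (a b : nat -> R) : (forall n, (0 <= a n)%R) -> (forall n, (0 <= b n)%R) ->
  \sum_(n <oo) ((\sum_(m < n.+1) a m * b (n - m)%N)%R%:E) =
  (\sum_(n <oo) (a n)%:E) * (\sum_(n <oo) (b n)%:E).
Proof.
move=> a0 b0.
pose h n m := if (m <= n)%N then (a m * b (n - m)%N)%R%:E else 0.
have h0 : forall n m, 0 <= h n m.
  by move=> n m; rewrite /h; case: ifP => // _; rewrite lee_fin mulr_ge0.
have E1 : forall n, ((\sum_(m < n.+1) a m * b (n - m)%N)%R%:E) = \sum_(m <oo) h n m.
  move=> n; rewrite (@nneseries_split _ (h n) 0 n.+1) //.
  rewrite add0n eseries0 ?adde0; last first.
    by move=> m Hm _; rewrite /h; case: ifP => // H; exfalso; lia.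
  rewrite -sumEFin big_mkord; apply: eq_bigr => -[m Hm] _.
  by rewrite /h /= -ltnS Hm.
rewrite (eq_eseriesr (fun n _ => E1 n)) nneseries_interchange //.
transitivity (\sum_(m <oo) ((a m)%:E * \sum_(n <oo) (b n)%:E)).
  apply: eq_eseriesr => m _.
  rewrite (@nneseries_split _ (h^~ m) 0 m) // add0n.
  rewrite big_mkord big1 ?add0e; last first.
    by move=> -[n Hn] _; rewrite /h /=; case: ifP => // H; exfalso; lia.
  rewrite -nneseries_addn // -nneseriesZl //; last by move=> n _; rewrite lee_fin.
  apply: eq_eseriesr => n _.
  by rewrite /h leq_addl addnK EFinM.
have A0 : forall n, 0 <= (a n)%:E by move=> n; rewrite lee_fin.
have B0 : 0 <= \sum_(n <oo) (b n)%:E by apply: nneseries_ge0 => n _ _; rewrite lee_fin.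
by rewrite nneseries_mulr_gen.
Qed.

End Ser.

End MSer.
Import MSer.

Module MGF.
Import Order.TTheory GRing.Theory Num.Theory.
Set Implicit Arguments. Unset Strict Implicit. Unset Printing Implicit Defensive.
Local Open Scope ring_scope.

Section GF.
Variables (R : realType) (N : nat) (p : 'I_N -> 'I_N -> bool -> R).
Hypothesis Hp0 : forall i j k, i != j -> 0 <= p i j k.
Variables (lam : R).
Hypothesis Hlam : 0 <= lam.
Notation L := (letter N).

Lemma pathw_ge0 (i : 'I_N) (w cs : seq L) : 0 <= pathw p i w cs.
Proof.
elim: cs w => [|a cs IH] w //=.
by rewrite mulr_ge0 //; case: ifP => // H; apply: Hp0; rewrite eq_sym.
Qed.

Lemma Pn_ge0 (i : 'I_N) n (x : seq L) : 0 <= Pn p i n x.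
Proof. by apply: sumr_ge0 => cs _; exact: pathw_ge0. Qed.

Lemma Fm_ge0 (i : 'I_N) (b : L) m : 0 <= Fm p i b m.
Proof. by apply: sumr_ge0 => cs _; exact: pathw_ge0. Qed.

Lemma Pn_nonred (i : 'I_N) n (x : seq L) : ~~ red i None x -> Pn p i n x = 0.
Proof.
move=> Hx; rewrite PnE big1 // => cs _.
case: eqP => // Hw.
have [//|Hnz] := eqVneq (pathw p i [::] cs) 0.
have := walk_red Hnz isT; rewrite -/(walk i cs) Hw => H.
by rewrite H in Hx.
Qed.

Lemma red_None (s : 'I_N) pv (w : seq L) : red s pv w -> red s None w.
Proof. by case: w => [|c w] //= /and3P[-> _ ->]. Qed.

Local Open Scope ereal_scope.

Definition GFP (i : 'I_N) (x : seq L) : \bar R :=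
  \sum_(n <oo) ((Pn p i n x * lam ^+ n)%R%:E).

Fixpoint RR (s : 'I_N) (x : seq L) : \bar R :=
  match x with
  | [::] => 1
  | (j, k) :: x' => Rgf p s j k lam * RR j x'
  end.

Lemma Rgf_ge0 (i j : 'I_N) k : 0 <= Rgf p i j k lam.
Proof.
apply: nneseries_ge0 => n _ _; rewrite lee_fin mulr_ge0 ?exprn_ge0 //.
by apply: sumr_ge0 => cs _; exact: pathw_ge0.
Qed.

Lemma Sgf_ge0 (i : 'I_N) : 0 <= Sgf p i lam.
Proof.
by apply: nneseries_ge0 => n _ _; rewrite lee_fin mulr_ge0 ?exprn_ge0 ?Pn_ge0.
Qed.

Lemma GFP_cons (i j : 'I_N) k (x : seq L) :
  red i None ((j, k) :: x) -> GFP i ((j, k) :: x) = Rgf p i j k lam * GFP j x.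
Proof.
move=> Hr.
rewrite /GFP.
have E : forall n, ((Pn p i n ((j, k) :: x) * lam ^+ n)%R%:E) =
  ((\sum_(m < n.+1) (Fm p i (j, k) m * lam ^+ m) *
     (Pn p j (n - m)%N x * lam ^+ (n - m)%N))%R%:E).
  move=> n; congr EFin; rewrite Pn_cons // mulr_suml; apply: eq_bigr => -[m Hm] _ /=.
  rewrite mulrACA -exprD subnKC //.
rewrite (eq_eseriesr (fun n _ => E n)).
rewrite (@cauchy_nn _ (fun m => Fm p i (j, k) m * lam ^+ m)%R
                      (fun n => Pn p j n x * lam ^+ n)%R) //.
- by move=> n; rewrite mulr_ge0 ?exprn_ge0 ?Fm_ge0.
- by move=> n; rewrite mulr_ge0 ?exprn_ge0 ?Pn_ge0.
Qed.

Lemma GFP_red (i : 'I_N) (x : seq L) :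
  red i None x -> GFP i x = RR i x * Sgf p (target i x) lam.
Proof.
elim: x i => [|[j k] x IH] i Hr /=.
  by rewrite mul1e.
rewrite GFP_cons // IH; last by move: Hr => /= /andP[_ /red_None].
by rewrite muleA.
Qed.

End GF.

End MGF.
Import MGF.

Module MFin1.
Import Order.TTheory GRing.Theory Num.Theory.
Set Implicit Arguments. Unset Strict Implicit. Unset Printing Implicit Defensive.
Local Open Scope ring_scope.

Section ESumTup.
Variables (R : realType) (T : finType).
Local Open Scope ereal_scope.
Lemma esum_tuple_cat n m k (F : seq T -> \bar R) : n = (m + k)%N ->
  (\sum_(t : n.-tuple T) F t =
  \sum_(x : m.-tuple T) \sum_(y : k.-tuple T) F (x ++ y))%E.
Proof. by move=> H; rewrite (big_tuple_cat _ _ H). Qed.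
Lemma esum_tuple_cons n (F : seq T -> \bar R) :
  (\sum_(t : n.+1.-tuple T) F t =
  \sum_(c : T) \sum_(t : n.-tuple T) F (c :: t))%E.
Proof. by rewrite big_tuple_cons. Qed.
Lemma esum_tuple0 (F : seq T -> \bar R) : (\sum_(t : 0.-tuple T) F t = F [::])%E.
Proof. by rewrite big_tuple0. Qed.
Lemma esum_tuple1 (F : seq T -> \bar R) :
  (\sum_(t : 1.-tuple T) F t = \sum_(c : T) F [:: c])%E.
Proof. rewrite esum_tuple_cons; apply: eq_bigr => c _; exact: (esum_tuple0 (fun s => F (c :: s))). Qed.
End ESumTup.

Section Fin1.
Variables (R : realType) (N : nat) (p len : 'I_N -> 'I_N -> bool -> R).
Hypothesis Hp0 : forall i j k, i != j -> 0 <= p i j k.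
Variables (lam z : R).
Hypothesis Hlam : 0 <= lam.
Hypothesis Hz : 0 <= z.
Notation L := (letter N).
Local Open Scope ereal_scope.

Lemma esum1L (F : seq L -> \bar R) :
  \sum_(t : 1.-tuple L) F t = \sum_(c : L) F [:: c].
Proof. by rewrite big_tuple_cons; apply: eq_bigr => c _; rewrite (big_tuple0 _ (fun s => F (c :: s))). Qed.
Lemma esumcatL n m k (F : seq L -> \bar R) : n = (m + k)%N ->
  \sum_(t : n.-tuple L) F t = \sum_(x : m.-tuple L) \sum_(y : k.-tuple L) F (x ++ y).
Proof. by move=> H; rewrite (big_tuple_cat _ _ H). Qed.
Lemma esum0L (F : seq L -> \bar R) : \sum_(t : 0.-tuple L) F t = F [::].
Proof. by rewrite big_tuple0. Qed.

Definition side (s : bool) (t : 'I_N) : 'I_(N + N) :=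
  unsplit (if s then inr t else inl t).

Lemma side_eq s t s' t' : (side s t == side s' t') = ((t, s) == (t', s')).
Proof.
apply/eqP/eqP => [H|]; last by case=> -> ->.
move: (congr1 (@fintype.split N N) H) => {H}; rewrite /side !unsplitK.
by case: s; case: s' => // -[->].
Qed.

Definition Bm k s j := Bmx p len k lam z s j.
Notation Km := (Kmx p len lam z).

Lemma Bm_ge0 k s j : 0 <= Bm k s j.
Proof.
rewrite /Bm /Bmx; case: ifP => // _.
by rewrite mule_ge0 ?Rgf_ge0 // lee_fin powR_ge0.
Qed.

Lemma Bm_diag k t : Bm k t t = 0.
Proof. by rewrite /Bm /Bmx eqxx. Qed.

Lemma Km_ge0 a b : 0 <= Km a b.
Proof. by rewrite /Km /Kmx; case: (fintype.split a); case: (fintype.split b) => *; rewrite ?Bm_ge0. Qed.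

Lemma Km_side s t b :
  Km (side s t) b =
  \sum_(c : L) (if (s != c.2) && (side c.2 c.1 == b) then Bm c.2 t c.1 else 0).
Proof.
rewrite -(splitK b).
have [s' [j ->]] : exists s' j, unsplit (fintype.split b) = side s' j.
  by case: (fintype.split b) => j; [exists false | exists true]; exists j.
transitivity (\sum_(c : L) (if c == (j, s') then (if s != s' then Bm s' t j else 0) else 0)).
  rewrite /Km /Kmx /side !unsplitK.
  rewrite -big_mkcond big_pred1_eq.
  by case: s; case: s'.
apply: eq_bigr => -[c1 c2] _ /=.
rewrite side_eq; case: eqP => [[-> ->]|]; first by case: ifP.
by rewrite andbF.
Qed.

Fixpoint W (s : 'I_N) (x : seq L) : \bar R :=
  match x with
  | [::] => 1
  | (j, k) :: x' => Bm k s j * W j x'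
  end.

Lemma W_ge0 s x : 0 <= W s x.
Proof. by elim: x s => [|[j k] x IH] s //=; rewrite mule_ge0 ?Bm_ge0. Qed.

Lemma W_rcons s x (c : L) : W s (rcons x c) = W s x * Bm c.2 (target s x) c.1.
Proof.
elim: x s => [|[j k] x IH] s /=; first by case: c => c1 c2 /=; rewrite mule1 mul1e.
by rewrite IH muleA.
Qed.

Definition lsb (x : seq L) := if lastsign x is Some s then s else false.
Variable i : 'I_N.
Definition state (x : seq L) := side (lsb x) (target i x).

Lemma lastsign_ne (x : seq L) c2 : x != [::] -> (lastsign x != Some c2) = (lsb x != c2).
Proof.
case/lastP: x => [|x l] // _; rewrite /lsb lastsign_rcons.
case: (l.2 =P c2) => [->|H]; first by rewrite !eqxx.
by rewrite /=; apply/eqP => -[] E; exact: H E.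
Qed.

Lemma erow_ge0 d b : 0 <= erowpow Km (vbar R i) d b.
Proof.
elim: d b => [|d IH] b /=.
  by rewrite /vbar; case: (fintype.split b) => j; case: ifP.
by apply: sume_ge0 => a _; rewrite mule_ge0 ?Km_ge0.
Qed.

Lemma esplitL (I : finType) (F G : I -> \bar R) :
  \sum_(c : I) (F c + G c) = \sum_(c : I) F c + \sum_(c : I) G c.
Proof. by rewrite big_split. Qed.

Lemma eexchange (I J : finType) (F : I -> J -> \bar R) :
  \sum_(a : I) \sum_(x : J) F a x = \sum_(x : J) \sum_(a : I) F a x.
Proof. by rewrite exchange_big. Qed.

Lemma sum_sel (P : bool) (s : 'I_(N + N)) (w : \bar R) (K : 'I_(N + N) -> \bar R) :
  \sum_(a : 'I_(N + N)) (if P && (s == a) then w else 0) * K a = if P then w * K s else 0.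
Proof.
case: P => /=; last by rewrite big1 // => a _; rewrite mul0e.
rewrite (eq_bigr (fun a => if a == s then w * K a else 0)); last first.
  by move=> a _; rewrite eq_sym; case: eqP => _; rewrite ?mul0e.
by rewrite -big_mkcond big_pred1_eq.
Qed.

Lemma ifnil_lastsign (x : seq L) : (if x is [::] then None else lastsign x) = lastsign x.
Proof. by case: x. Qed.

Lemma lastsign_lsb (x : seq L) (c : L) : lsb (rcons x c) = c.2.
Proof. by rewrite /lsb lastsign_rcons. Qed.

Lemma sum_delta (F : 'I_N -> \bar R) :
  \sum_(a < N) (if i == a then 1 else 0) * F a = F i.
Proof.
rewrite (eq_bigr (fun a => if a == i then F a else 0)); last first.
  by move=> a _; rewrite eq_sym; case: eqP => _; rewrite ?mul1e ?mul0e.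
by rewrite -big_mkcond big_pred1_eq.
Qed.

Lemma erow_claim d b :
  erowpow Km (vbar R i) d.+1 b =
  \sum_(x : d.+1.-tuple L) (if red i None x && (state x == b) then W i x else 0).
Proof.
elim: d b => [|d IH] b.
  rewrite (esum1L (fun x => if red i None x && (state x == b) then W i x else 0)).
  have -> : erowpow Km (vbar R i) 1 b = \sum_(a < N + N) vbar R i a * Km a b by [].
  have -> : \sum_(a < N + N) vbar R i a * Km a b =
     \sum_(a < N) vbar R i (lshift N a) * Km (lshift N a) b +
     \sum_(a < N) vbar R i (rshift N a) * Km (rshift N a) b by rewrite big_split_ord.
  have E1 : forall (a : 'I_N) (s : bool), vbar R i (side s a) = (if i == a then 1 else 0).
    by move=> a s; rewrite /vbar /side unsplitK; case: s.
  rewrite (eq_bigr (fun a => (if i == a then 1 else 0) * Km (side false a) b)); last first.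
    by move=> a _; rewrite -(E1 a false).
  rewrite [X in _ + X](eq_bigr (fun a => (if i == a then 1 else 0) * Km (side true a) b)); last first.
    by move=> a _; rewrite -(E1 a true).
  rewrite !sum_delta !Km_side -esplitL; apply: eq_bigr => -[c1 c2] _.
  have Hred : red i None [:: (c1,c2)] = (c1 != i) by rewrite /= andbT.
  have Hst : state [:: (c1,c2)] = side c2 c1 by [].
  have HW : W i [:: (c1,c2)] = Bm c2 i c1 by rewrite /W mule1.
  rewrite Hred Hst HW.
  case: (c1 =P i) => [->|Hc]; first by rewrite Bm_diag !if_same adde0.
  by clear Hred Hst HW; case: c2 => /=; case: ifP => _; rewrite ?adde0 ?add0e.
have -> : erowpow Km (vbar R i) d.+2 b =
  \sum_(a < N + N) erowpow Km (vbar R i) d.+1 a * Km a b by [].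
rewrite (eq_bigr (fun a => \sum_(x : d.+1.-tuple L)
   ((if red i None x && (state x == a) then W i x else 0) * Km a b))); last first.
  move=> a _; rewrite IH ge0_sume_distrl // => x _.
  by case: ifP => _; rewrite ?W_ge0.
rewrite eexchange.
rewrite (esumcatL (fun x => if red i None x && (state x == b) then W i x else 0)
   (esym (addn1 d.+1))).
apply: eq_bigr => x _.
rewrite (esum1L (fun y => if red i None (x ++ y) && (state (x ++ y) == b) then W i (x ++ y) else 0)).
rewrite sum_sel.
have Hx : (x : seq L) != [::] by case: x => -[|c s] Hs.
case: ifP => Hr; last first.
  rewrite big1 // => c _; rewrite cats1 red_rcons Hr //.
rewrite Km_side ge0_sume_distrr; last by move=> c _; case: ifP => _; rewrite ?Bm_ge0.
apply: eq_bigr => -[c1 c2] _.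
rewrite cats1 red_rcons Hr ifnil_lastsign (lastsign_ne _ Hx) W_rcons.
rewrite /state lastsign_lsb target_rcons.
have P1 : (c1, c2).1 = c1 := erefl. have P2 : (c1, c2).2 = c2 := erefl.
rewrite !P1 !P2.
case: (c1 =P target i x) => [->|Hc].
  by rewrite Bm_diag !if_same mule0.
by case: (lsb x != c2); case: (side c2 c1 == b); rewrite ?mule0.
Qed.

Lemma ebilin_claim d :
  ebilin Km (vbar R i) (sbar p lam) d.+1 =
  \sum_(x : d.+1.-tuple L) (if red i None x then W i x * Sgf p (target i x) lam else 0).
Proof.
rewrite /ebilin.
rewrite (eq_bigr (fun a => \sum_(x : d.+1.-tuple L)
   ((if red i None x && (state x == a) then W i x else 0) * sbar p lam a))); last first.
  move=> a _; rewrite erow_claim ge0_sume_distrl // => x _.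
  by case: ifP => _; rewrite ?W_ge0.
rewrite eexchange; apply: eq_bigr => x _.
rewrite sum_sel.
by rewrite /sbar /state /side unsplitK; case: (lsb x).
Qed.

End Fin1.

End MFin1.
Import MFin1.

Module MFin2.
Import Order.TTheory GRing.Theory Num.Theory.
Set Implicit Arguments. Unset Strict Implicit. Unset Printing Implicit Defensive.
Local Open Scope ring_scope.

Section Fin2.
Variables (R : realType) (N : nat) (p len : 'I_N -> 'I_N -> bool -> R).
Hypothesis Hp0 : forall i j k, i != j -> 0 <= p i j k.
Hypothesis Hlen : forall i j k, i != j -> 0 <= len i j k.
Variables (lam z : R).
Hypothesis Hlam : 0 <= lam.
Hypothesis Hz : 0 <= z.
Variable i : 'I_N.
Notation L := (letter N).

Lemma powRD_ge0 (a b : R) : 0 <= a -> 0 <= b -> z `^ (a + b) = z `^ a * z `^ b.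
Proof.
move=> Ha Hb.
case: (z =P 0) => [->|Hz0]; last by rewrite powRD //; apply/implyP => _; exact/eqP.
case: (a =P 0) => [->|Ha0]; first by rewrite add0r powRr0 mul1r.
have Hab : a + b != 0 by rewrite gt_eqF // ltr_wpDr // lt_neqAle Ha andbT eq_sym; exact/eqP.
by rewrite powR0 // powR0 ?mul0r //; exact/eqP.
Qed.

Lemma mlen_ge0 (s : 'I_N) (x : seq L) : red s None x -> 0 <= mlen_from len s x.
Proof.
elim: x s => [|[j k] x IH] s //= /andP[Hj Hr].
by rewrite addr_ge0 // ?Hlen 1?eq_sym // IH // (red_None Hr).
Qed.

Local Open Scope ereal_scope.

Lemma zRR (s : 'I_N) (x : seq L) :
  red s None x -> (z `^ mlen_from len s x)%:E * RR p lam s x = W p len lam z s x.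
Proof.
elim: x s => [|[j k] x IH] s /=; first by rewrite powRr0 mul1e.
move=> /andP[Hj Hr]; have Hr' := red_None Hr.
rewrite powRD_ge0 ?Hlen ?mlen_ge0 // 1?eq_sym // EFinM.
rewrite muleACA IH // /Bm /Bmx eq_sym Hj.
by [].
Qed.

Lemma term_eq (x : seq L) :
  (z `^ mlen_from len i x)%:E * GFP p lam i x =
  if red i None x then W p len lam z i x * Sgf p (target i x) lam else 0.
Proof.
case: ifP => Hr.
  by rewrite GFP_red // muleA zRR.
rewrite /GFP eseries0 ?mule0 // => n _ _.
by rewrite Pn_nonred ?Hr // mul0r.
Qed.

Definition fd (d : nat) : \bar R :=
  \sum_(x : d.-tuple L) (z `^ mlen_from len i x)%:E * GFP p lam i x.

Lemma fd0 : fd 0 = Sgf p i lam.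
Proof. by rewrite /fd (esum0L (fun x : seq L => (z `^ mlen_from len i x)%:E * GFP p lam i x)) /= powRr0 mul1e. Qed.

Lemma fdS d : fd d.+1 = ebilin (Kmx p len lam z) (vbar R i) (sbar p lam) d.+1.
Proof.
rewrite /fd (eq_bigr (fun x : d.+1.-tuple L =>
  if red i None x then W p len lam z i x * Sgf p (target i x) lam else 0)); last first.
  by move=> x _; exact: term_eq.
by rewrite ebilin_claim.
Qed.

Local Close Scope ereal_scope.

Lemma Pn_big n (x : seq L) : (n < size x)%N -> Pn p i n x = 0.
Proof.
move=> Hn; rewrite PnE big1 // => cs _.
case: eqP => // Hw.
have := size_foldl i [::] cs; rewrite -/(walk i cs) Hw /= => H.
have H2 : (size x <= n)%N.
  by apply: (leq_trans H); rewrite add0n; exact: (eq_leq (size_tuple cs)).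
by exfalso; lia.
Qed.

Lemma pathsum_split n :
  \sum_(cs : n.-tuple L) pathw p i [::] cs * z `^ mlen_from len i (walk i cs) =
  \sum_(d < n.+1) \sum_(x : d.-tuple L) z `^ mlen_from len i x * Pn p i n x.
Proof.
transitivity (\sum_(cs : n.-tuple L) \sum_(d < n.+1) \sum_(x : d.-tuple L)
   z `^ mlen_from len i x * (if walk i cs == x then pathw p i [::] cs else 0)).
  apply: eq_bigr => cs _.
  set w := walk i cs.
  have Hs : (size w < n.+1)%N.
    have := size_foldl i [::] cs; rewrite -/(walk i cs) -/w /= => H.
    have H2 : (size w <= n)%N.
      by apply: (leq_trans H); rewrite add0n; exact: (eq_leq (size_tuple cs)).
    by rewrite ltnS.
  have Hother : \sum_(d < n.+1 | d != Ordinal Hs) \sum_(x : d.-tuple L)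
      z `^ mlen_from len i x * (if w == x then pathw p i [::] cs else 0) = 0.
    apply: big1 => d Hd; apply: big1 => x _.
    case: (w =P x) => [E|_]; last by rewrite mulr0.
    exfalso; move/eqP: Hd; apply; apply/val_inj => /=.
    by rewrite E size_tuple.
  have Hmain : \sum_(x : (Ordinal Hs).-tuple L)
      z `^ mlen_from len i x * (if w == x then pathw p i [::] cs else 0) =
      pathw p i [::] cs * z `^ mlen_from len i w.
    rewrite (bigD1 (in_tuple w : (Ordinal Hs).-tuple L)) //= big1 ?addr0.
      by rewrite eqxx mulrC.
    move=> x Hx; case: (w =P x) => [E|_]; last by rewrite mulr0.
    exfalso; move/eqP: Hx; apply; apply/val_inj => /=.
    exact: (esym E).
  by rewrite (bigD1 (Ordinal Hs)) //= Hother addr0 Hmain.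
rewrite exchange_big; apply: eq_bigr => d _.
rewrite exchange_big; apply: eq_bigr => x _.
by rewrite PnE mulr_sumr.
Qed.

End Fin2.

End MFin2.
Import MFin2.

Unset Implicit Arguments.
Set Strict Implicit.
Set Printing Implicit Defensive.
Local Open Scope ring_scope.

Theorem proposition5p9 (R : realType) (N : nat) (HN : (3 <= N)%N)
  (p : 'I_N -> 'I_N -> bool -> R)
  (Hp : forall (i j : 'I_N) (k : bool), i != j -> 0 < p i j k < 1)
  (Hsum : forall i : 'I_N, \sum_(j < N | j != i) \sum_(k : bool) p i j k = 1)
  (len : 'I_N -> 'I_N -> bool -> R)
  (Hlen : forall (i j : 'I_N) (k : bool), i != j -> 0 <= len i j k)
  (lam z : R) (Hlam : 0 <= lam) (Hz : 0 <= z) (i : 'I_N) :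
  Ggf p len i lam z =
    (Sgf p i lam +
     \sum_(1 <= d <oo) ebilin (Kmx p len lam z) (@vbar R N i) (sbar p lam) d)%E.
Proof.
have Hp0 : forall (i j : 'I_N) (k : bool), i != j -> 0 <= p i j k.
  by move=> i' j k H; case/andP: (Hp _ _ k H) => /ltW.
pose L := letter N.
pose g n d := (\sum_(x : d.-tuple L)
   (z `^ mlen_from len i x)%:E * (Pn p i n x * lam ^+ n)%:E)%E.
have g0 : forall n d, (0 <= g n d)%E.
  move=> n d; apply: sume_ge0 => x _.
  by rewrite mule_ge0 // lee_fin ?powR_ge0 // mulr_ge0 ?exprn_ge0 ?Pn_ge0.
have E1 : forall n, ((\sum_(cs : n.-tuple L) pathw p i [::] cs *
     z `^ (mlen_from len i (walk i cs))) * lam ^+ n)%:E = (\sum_(d <oo) g n d)%E.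
  move=> n; rewrite pathsum_split mulr_suml.
  rewrite (@nneseries_split _ (g n) 0 n.+1) //.
  rewrite add0n eseries0 ?adde0; last first.
    move=> d Hd _; apply: big1 => x _.
    rewrite (Pn_big p Hlam Hz) ?mul0r ?mule0 //.
    by rewrite size_tuple.
  rewrite big_mkord -sumEFin; apply: eq_bigr => d _.
  rewrite mulr_suml -sumEFin; apply: eq_bigr => x _.
  by rewrite -mulrA EFinM.
rewrite /Ggf (eq_eseriesr (fun n _ => E1 n)) nneseries_interchange //.
have E2 : forall d, (\sum_(n <oo) g n d)%E = fd p len lam z i d.
  move=> d; rewrite /g nneseries_sum; last first.
    by move=> x n _; rewrite mule_ge0 // lee_fin ?powR_ge0 // mulr_ge0 ?exprn_ge0 ?Pn_ge0.
  apply: eq_bigr => x _; rewrite nneseriesZl //.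
  by move=> n _; rewrite lee_fin mulr_ge0 ?exprn_ge0 ?Pn_ge0.
rewrite (eq_eseriesr (fun d _ => E2 d)).
rewrite nneseries_recl //; last first.
  move=> d _; apply: sume_ge0 => x _; rewrite mule_ge0 // ?lee_fin ?powR_ge0 //.
  by apply: nneseries_ge0 => n _ _; rewrite lee_fin mulr_ge0 ?exprn_ge0 ?Pn_ge0.
rewrite fd0; congr (_ + _)%E.
apply: congr_lim; apply: funext => m; apply: eq_big_nat => d /andP[Hd _].
case: d Hd => // d _; exact: fdS.
Qed.
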